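(* Let $(V,o)$ be a normal surface singularity with $p_f(V,o)>0$, and let $\pi\colon X\to V$ be the minimal resolution. Assume that the fundamental cycle $Z$ is essentially irreducible, let $A$ be the unique irreducible component of $Z$ that is not a $(-2)$-curve, and assume $K_X\cdot A+Z^2\ge0$ and $D_m=Z_{min}$, where $D_m$ is the smallest term of the Yau sequence for $Z$. Then the canonical cycle is $$Z_K=\Big(\frac{2-2p_f(V,o)}{Z^2}+1\Big)Y,$$ where $Y$ is the Yau cycle.
   Context: Let $\pi^{-1}(o)=\bigcup_{i=1}^nE_i$ be the irreducible components of the exceptional set. A cycle is $D=\sum d_iE_i$, $d_i\in\mathbb Z$; $D_1\le D_2$ is coefficientwise, $D_1<D_2$ means $D_1\le D_2$, $D_1\neq D_2$. $K_X$ is the canonical divisor of $X$; for a cycle $D>0$, $p_a(D)=1+\frac12(D^2+D\cdot K_X)$. The fundamental cycle $Z$ is the smallest cycle $D>0$ with support $\pi^{-1}(o)$ and $D\cdot E_i\le0$ for all $i$; $p_f(V,o)=p_a(Z)$. ''$\mathcal O_D(-C)$ numerically trivial'' means $C\cdot E=0$ for every component $E\le D$. $Z_{min}$ is the unique minimal cycle $0<Z_{min}\le Z$ with $p_a(Z_{min})=p_a(Z)$. Yau sequence: for a cycle $D$ that is the fundamental cycle on its support with $Z_{min}\le D$, $p_a(D)=p_f(V,o)$ and $D\cdot E=0$ for all components $E\le Z_{min}$, its Tyurina component is the unique maximal cycle $0<D'<D$ with $\mathcal O_{D'}(-D)$ numerically trivial and $p_a(D')=p_a(D)$. Set $D_1=Z$,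 $D_{i+1}=$ Tyurina component of $D_i$ as long as $D_i\cdot E=0$ for all components $E\le Z_{min}$, stopping at the first $D_m$ with $D_m\cdot Z_{min}<0$; $Y=\sum_{i=1}^mD_i$ is the Yau cycle. A $(-2)$-curve is a smooth rational exceptional curve $E$ with $E^2=-2$. $Z$ is essentially irreducible if there is a component $A\le Z$ which is not a $(-2)$-curve such that, with $k$ the coefficient of $A$ in $Z$, either $Z=kA$ or all components of $Z-kA$ are $(-2)$-curves. The canonical cycle $Z_K$ is the cycle with rational coefficients supported on $\pi^{-1}(o)$ with $Z_K\cdot E_i=-K_X\cdot E_i$ for all $i$. *)

(* Defs.v *)
(* Numerical (intersection-theoretic) model of the minimal
   resolution of a normal surface singularity: exceptional components
   E_0..E_{n-1}, intersection matrix M (M i j = E_i . E_j) and canonical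
   numbers k i = K_X . E_i. *)
From HB Require Import structures.
From mathcomp Require Import all_boot all_order all_algebra.
Set Implicit Arguments. Unset Strict Implicit. Unset Printing Implicit Defensive.
Import Order.TTheory GRing.Theory Num.Theory.
Local Open Scope ring_scope.

Section Defs.
Variable n : nat.

(* cycles D = sum d_i E_i *)
Definition ecycle := {ffun 'I_n -> int}.

Definition Ecomp (i : 'I_n) : ecycle := [ffun j => (j == i)%:R].

Definition ip (M : 'M[int]_n) (D1 D2 : ecycle) : int :=
  \sum_(i < n) \sum_(j < n) D1 i * M i j * D2 j.

Definition Kdot (k : 'I_n -> int) (D : ecycle) : int := \sum_(i < n) D i * k i.

Definition pa (M : 'M[int]_n) (k : 'I_n -> int) (D : ecycle) : rat :=
  1 + ((ip M D D + Kdot k D)%:~R) / 2.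

Definition cle (D1 D2 : ecycle) : Prop := forall i, D1 i <= D2 i.
Definition clt (D1 D2 : ecycle) : Prop := cle D1 D2 /\ D1 <> D2.
Definition cpos (D : ecycle) : Prop := clt 0 D.

Definition comp_le (j : 'I_n) (D : ecycle) : Prop := 1 <= D j.

(* O_D(-C) numerically trivial: C . E = 0 for every component E <= D *)
Definition num_trivial (M : 'M[int]_n) (D C : ecycle) : Prop :=
  forall j, comp_le j D -> ip M C (Ecomp j) = 0.

(* Data of a minimal resolution of a normal surface singularity:
   symmetric, nonnegative off the diagonal, negative definite, connected dual
   graph, adjunction parity K.E + E^2 = 2 p_a(E) - 2 with p_a(E) >= 0, and
   minimality (no (-1)-curves), i.e. K_X . E_i >= 0 for all i. *)
Definition min_res_data (M : 'M[int]_n) (k : 'I_n -> int) : Prop :=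
  [/\ M^T = M,
      (forall i j, i != j -> 0 <= M i j),
      (forall D : ecycle, D != 0 -> ip M D D < 0),
      (forall i j, connect (fun a b => M a b != 0) i j)
    & (forall i, [/\ (2 %| k i + M i i)%Z, -2 <= k i + M i i & 0 <= k i])].

Definition is_fundamental_cycle (M : 'M[int]_n) (Z : ecycle) : Prop :=
  [/\ cpos Z, (forall i, Z i != 0), (forall i, ip M Z (Ecomp i) <= 0)
    & (forall D, cpos D -> (forall i, D i != 0) ->
         (forall i, ip M D (Ecomp i) <= 0) -> cle Z D)].

Definition is_Zmin M k (Z Zm : ecycle) : Prop :=
  [/\ cpos Zm, cle Zm Z, pa M k Zm = pa M k Z
    & (forall D, cpos D -> cle D Z -> pa M k D = pa M k Z -> cle Zm D)].

Definition tyurina_cand M k (D D' : ecycle) : Prop :=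
  [/\ cpos D', clt D' D, num_trivial M D' D & pa M k D' = pa M k D].
Definition is_tyurina M k (D D' : ecycle) : Prop :=
  tyurina_cand M k D D' /\ (forall D'', tyurina_cand M k D D'' -> cle D'' D').

Definition is_yau_sequence M k (Z Zm : ecycle) (Ds : seq ecycle) : Prop :=
  [/\ Ds <> [::], nth 0 Ds 0 = Z,
      (forall i : nat, (i.+1 < size Ds)%N ->
         num_trivial M Zm (nth 0 Ds i) /\
         is_tyurina M k (nth 0 Ds i) (nth 0 Ds i.+1))
    & ip M (last 0 Ds) Zm < 0].

Definition yau_cycle (Ds : seq ecycle) : ecycle := \sum_(D <- Ds) D.

(* (-2)-curve: smooth rational with E^2 = -2; numerically E^2 = -2 and
   K.E = 0 (equivalently p_a(E) = 0, i.e. E smooth rational). *)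
Definition minus2 (M : 'M[int]_n) (k : 'I_n -> int) (i : 'I_n) : bool :=
  (M i i == -2) && (k i == 0).

Definition essentially_irreducible M k (Z : ecycle) : Prop :=
  exists A : 'I_n, [/\ comp_le A Z, ~~ minus2 M k A &
    (Z = [ffun j => Z A * Ecomp A j] \/
     forall j, (Z - [ffun j => Z A * Ecomp A j]) j != 0 -> minus2 M k j)].

Definition is_canonical_cycle (M : 'M[int]_n) (k : 'I_n -> int)
  (ZK : 'I_n -> rat) : Prop :=
  forall i, \sum_(j < n) ZK j * (M j i)%:~R = - (k i)%:~R.

End Defs.

(* Main.v *)
Require Import Defs.
From mathcomp Require Import all_boot all_order all_algebra.
From mathcomp Require Import ring lra zify.
Set Implicit Arguments. Unset Strict Implicit. Unset Printing Implicit Defensive.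
Import Order.TTheory GRing.Theory Num.Theory.
Local Open Scope ring_scope.

Section Basic.
Variable n : nat.
Variable M : 'M[int]_n.
Variable k : 'I_n -> int.

Definition dt (D : ecycle n) (j : 'I_n) : int := \sum_i D i * M i j.
Definition q (D : ecycle n) : int := ip M D D + Kdot k D.

Lemma ipE D1 D2 : ip M D1 D2 = \sum_j D2 j * dt D1 j.
Proof.
rewrite /ip exchange_big; apply: eq_bigr => j _.
rewrite /dt mulr_sumr; apply: eq_bigr => i _; ring.
Qed.

Lemma EcompE (j l : 'I_n) : Ecomp j l = (l == j)%:R.
Proof. by rewrite /Ecomp ffunE. Qed.

Lemma ip_Ecomp D j : ip M D (Ecomp j) = dt D j.
Proof.
rewrite ipE (bigD1 j) //= EcompE eqxx mul1r big1 ?addr0 // => l /negbTE hl.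
by rewrite EcompE hl mul0r.
Qed.

Lemma dt_Ecomp i j : dt (Ecomp i) j = M i j.
Proof.
rewrite /dt (bigD1 i) //= EcompE eqxx mul1r big1 ?addr0 // => l /negbTE hl.
by rewrite EcompE hl mul0r.
Qed.

Lemma dtD D1 D2 j : dt (D1 + D2) j = dt D1 j + dt D2 j.
Proof. by rewrite /dt -big_split; apply: eq_bigr => i _; rewrite ffunE mulrDl. Qed.

Lemma dtN D j : dt (- D) j = - dt D j.
Proof. by rewrite /dt -sumrN; apply: eq_bigr => i _; rewrite ffunE mulNr. Qed.

Lemma dtB D1 D2 j : dt (D1 - D2) j = dt D1 j - dt D2 j.
Proof. by rewrite dtD dtN. Qed.

Lemma dt0 j : dt 0 j = 0.
Proof. by rewrite /dt big1 // => i _; rewrite ffunE mul0r. Qed.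

Lemma dt_sum (s : seq (ecycle n)) j : dt (\sum_(D <- s) D) j = \sum_(D <- s) dt D j.
Proof.
elim: s => [|D s IH]; first by rewrite !big_nil dt0.
by rewrite !big_cons dtD IH.
Qed.

Lemma ipDl D1 D2 X : ip M (D1 + D2) X = ip M D1 X + ip M D2 X.
Proof. by rewrite !ipE -big_split; apply: eq_bigr => j _; rewrite dtD mulrDr. Qed.

Lemma ipBl D1 D2 X : ip M (D1 - D2) X = ip M D1 X - ip M D2 X.
Proof. by rewrite !ipE -sumrB; apply: eq_bigr => j _; rewrite dtB mulrBr. Qed.

Lemma ip_suml (s : seq (ecycle n)) X : ip M (\sum_(D <- s) D) X = \sum_(D <- s) ip M D X.
Proof.
elim: s => [|D s IH]; first by rewrite !big_nil ipE big1 // => j _; rewrite dt0 mulr0.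
by rewrite !big_cons ipDl IH.
Qed.

Hypothesis Msym : M^T = M.

Lemma Msy i j : M i j = M j i.
Proof. by rewrite -{1}Msym mxE. Qed.

Lemma ip_sym D1 D2 : ip M D1 D2 = ip M D2 D1.
Proof.
rewrite /ip exchange_big; apply: eq_bigr => j _; apply: eq_bigr => i _.
rewrite Msy; ring.
Qed.

Lemma ipDr D1 D2 X : ip M X (D1 + D2) = ip M X D1 + ip M X D2.
Proof. by rewrite ip_sym ipDl !(ip_sym X). Qed.

Lemma ipBr D1 D2 X : ip M X (D1 - D2) = ip M X D1 - ip M X D2.
Proof. by rewrite ip_sym ipBl !(ip_sym X). Qed.

Lemma KdotD D1 D2 : Kdot k (D1 + D2) = Kdot k D1 + Kdot k D2.
Proof. by rewrite /Kdot -big_split; apply: eq_bigr => i _; rewrite ffunE mulrDl. Qed.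

Lemma KdotB D1 D2 : Kdot k (D1 - D2) = Kdot k D1 - Kdot k D2.
Proof. by rewrite /Kdot -sumrB; apply: eq_bigr => i _; rewrite !ffunE mulrBl. Qed.

Lemma Kdot_Ecomp j : Kdot k (Ecomp j) = k j.
Proof.
rewrite /Kdot (bigD1 j) //= EcompE eqxx mul1r big1 ?addr0 // => l /negbTE hl.
by rewrite EcompE hl mul0r.
Qed.

Lemma qDE D j : q (D + Ecomp j) = q D + 2 * dt D j + M j j + k j.
Proof.
rewrite /q ipDl !ipDr KdotD Kdot_Ecomp ip_Ecomp (ip_sym (Ecomp j) D) ip_Ecomp.
rewrite ip_Ecomp dt_Ecomp; ring.
Qed.

Lemma qBE D j : q (D - Ecomp j) = q D - 2 * dt D j + M j j - k j.
Proof.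
rewrite /q ipBl !ipBr KdotB Kdot_Ecomp ip_Ecomp (ip_sym (Ecomp j) D) ip_Ecomp.
rewrite ip_Ecomp dt_Ecomp; ring.
Qed.

Lemma pa_eq D1 D2 : pa M k D1 = pa M k D2 <-> q D1 = q D2.
Proof.
rewrite /pa /q; split => [h|->] //.
have : ((ip M D1 D1 + Kdot k D1)%:~R : rat) = (ip M D2 D2 + Kdot k D2)%:~R.
  by have := h; move/addrI => h2; have := f_equal (fun x => x * 2) h2; rewrite !mulfVK.
by move/intr_inj.
Qed.

End Basic.

Section Laufer.
Variable n : nat.
Variable M : 'M[int]_n.
Variable k : 'I_n -> int.
Hypothesis Msym : M^T = M.
Hypothesis Moff : forall i j, i != j -> 0 <= M i j.
Hypothesis Hconn : forall i j, connect (fun a b => M a b != 0) i j.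
Hypothesis Hadj : forall i, -2 <= k i + M i i.
Variable Z : ecycle n.
Hypothesis HZ : is_fundamental_cycle M Z.

Lemma ffun0E (i : 'I_n) : (0 : ecycle n) i = 0.
Proof. by rewrite ffunE. Qed.

Lemma dt_nonneg D j : cle 0 D -> D j = 0 -> 0 <= dt M D j.
Proof.
move=> h0 hj; rewrite /dt; apply: sumr_ge0 => i _.
case: (eqVneq i j) => [->|hij]; first by rewrite hj mul0r.
by apply: mulr_ge0; [have := h0 i; rewrite ffun0E | exact: Moff].
Qed.

Lemma zero_prop D : cle 0 D -> (forall j, dt M D j <= 0) ->
  forall a b, M a b != 0 -> D a = 0 -> D b = 0.
Proof.
move=> h0 hdt a b hab ha.
case: (eqVneq a b) => [<-//|hne].
have hb0 : 0 <= D b by have := h0 b; rewrite ffun0E.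
have hMba : 0 < M b a.
  by rewrite lt0r (Msy Msym b a) hab /= Moff.
have : D b * M b a <= dt M D a.
  rewrite /dt (bigD1 b) //= lerDl; apply: sumr_ge0 => i hib.
  case: (eqVneq i a) => [->|hia]; first by rewrite ha mul0r.
  by apply: mulr_ge0; [have := h0 i; rewrite ffun0E | exact: Moff].
move: (hdt a) => h1 h2.
have h3 : D b * M b a <= 0 by apply: le_trans h2 h1.
apply/eqP; rewrite eq_le hb0 andbT; nia.
Qed.

Lemma full_support D : cle 0 D -> D != 0 -> (forall j, dt M D j <= 0) ->
  forall i, D i != 0.
Proof.
move=> h0 hD hdt i; apply/negP => /eqP hi.
have [j0 hj0] : exists j0, D j0 != 0.
  apply/existsP; apply: contraR hD => /existsPn h; apply/eqP/ffunP => j.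
  by rewrite ffun0E; apply/eqP; have := h j; rewrite negbK.
move: (Hconn i j0) => /connectP [p hp hl].
suff : D (last i p) = 0 by rewrite -hl => /eqP; rewrite (negbTE hj0).
elim: p i hi hp {hl} => [|x p IH] i hi //= /andP [hix hp].
apply: IH hp; exact: (zero_prop h0 hdt hix hi).
Qed.

Definition S (D : ecycle n) : int := \sum_i (Z i - D i).

Lemma S_ge D j : cle D Z -> Z j - D j <= S D.
Proof.
move=> h; rewrite /S (bigD1 j) //= lerDl; apply: sumr_ge0 => i _.
by rewrite subr_ge0.
Qed.

Lemma S_step D j : S (D + Ecomp j) = S D - 1.
Proof.
rewrite /S.
have -> : \sum_i (Z i - (D + Ecomp j) i) = \sum_i (Z i - D i) - \sum_i Ecomp j i.
  by rewrite -sumrB; apply: eq_bigr => i _; rewrite ffunE; ring.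
congr (_ - _); rewrite (bigD1 j) //= EcompE eqxx big1 ?addr0 // => l /negbTE hl.
by rewrite EcompE hl.
Qed.

Lemma cposDE (D : ecycle n) j : cpos D -> cle 0 (D + Ecomp j) /\ cpos (D + Ecomp j).
Proof.
move=> [h0 _].
have hc : cle 0 (D + Ecomp j).
  move=> i; rewrite !ffunE; have := h0 i; rewrite ffun0E => h.
  by apply: addr_ge0 => //; case: (i == j).
split => //; split => // h; have := congr1 (fun f : ecycle n => f j) h.
rewrite !ffunE eqxx; have := h0 j; rewrite ffun0E => hj.
move=> e; have : (0 : int) < D j + 1 by rewrite ltr_pwDr.
by rewrite -e ltxx.
Qed.

Lemma step_up D j : cpos D -> cle D Z -> 0 < dt M D j ->
  [/\ D j < Z j, cpos (D + Ecomp j), cle (D + Ecomp j) Z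
    & q M k D <= q M k (D + Ecomp j)].
Proof.
move=> hp hle hdt.
have hlt : D j < Z j.
  rewrite lt_neqAle hle andbT; apply/negP => /eqP hj.
  have h1 : 0 <= dt M (Z - D) j.
    apply: dt_nonneg; last by rewrite !ffunE hj subrr.
    by move=> i; rewrite !ffunE subr_ge0; exact: hle.
  have h2 : dt M Z j <= 0 by case: HZ => _ _ h _; rewrite -ip_Ecomp; exact: h.
  move: h1; rewrite dtB; lia.
split => //; first exact: (cposDE j hp).2.
- move=> i; rewrite !ffunE; case: (eqVneq i j) => [->|].
    by rewrite /= ; move: hlt; lia.
  by move=> _; rewrite /= addr0; exact: hle.
- rewrite qDE //; have := Hadj j; lia.
Qed.

Lemma laufer_aux N : forall D, cpos D -> cle D Z -> S D <= N%:Z -> q M k D <= q M k Z.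
Proof.
elim: N => [|N IH] D hp hle hS;
  (case: (pickP (fun j => 0 < dt M D j)) => [j hj | hnone]);
  try (have [hlt hp' hle' hq] := step_up hp hle hj).
- have := S_ge j hle; lia.
- have hall : forall j, dt M D j <= 0 by move=> j; have := hnone j; rewrite /= ltNge => /negbFE.
  have hfull := full_support (proj1 hp) (ltac:(apply/eqP => e; case: hp => _ h; exact: h (esym e))) hall.
  case: HZ => _ _ _ hmin.
  have hZD : cle Z D by apply: hmin => // i; rewrite ip_Ecomp; exact: hall i.
  have -> : D = Z by apply/ffunP => i; apply/eqP; rewrite eq_le hle hZD.
  done.
- apply: le_trans hq _; apply: IH => //; rewrite S_step; lia.
- have hall : forall j, dt M D j <= 0 by move=> j; have := hnone j; rewrite /= ltNge => /negbFE.
  have hfull := full_support (proj1 hp) (ltac:(apply/eqP => e; case: hp => _ h; exact: h (esym e))) hall.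
  case: HZ => _ _ _ hmin.
  have hZD : cle Z D by apply: hmin => // i; rewrite ip_Ecomp; exact: hall i.
  have -> : D = Z by apply/ffunP => i; apply/eqP; rewrite eq_le hle hZD.
  done.
Qed.

Lemma laufer D : cpos D -> cle D Z -> q M k D <= q M k Z.
Proof.
move=> hp hle; apply: (@laufer_aux (absz (S D))) => //.
by rewrite abszE ler_norm.
Qed.

End Laufer.

Lemma nondeg n (M : 'M[int]_n) :
  (forall D : ecycle n, D != 0 -> ip M D D < 0) ->
  forall V : 'I_n -> rat, (forall i, \sum_j V j * (M j i)%:~R = 0) -> forall j, V j = 0.
Proof.
move=> Hneg V hV.
pose P : rat := \prod_l ((denq (V l))%:~R : rat).
have hP : P != 0 by apply/prodf_neq0 => l _; rewrite intr_eq0 denq_neq0.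
pose D : ecycle n := [ffun j => numq (V j) * \prod_(l | l != j) denq (V l)].
have hD : forall j, ((D j)%:~R : rat) = V j * P.
  move=> j; rewrite ffunE intrM rmorph_prod /P [in RHS](bigD1 j) //= mulrA.
  congr (_ * _).
  have e : V j * (denq (V j))%:~R = (numq (V j))%:~R.
    by rewrite -{1}(divq_num_den (V j)) divfK // intr_eq0 denq_neq0.
  by rewrite e.
have hip : ((ip M D D)%:~R : rat) = 0.
  transitivity (P * P * \sum_j V j * \sum_i V i * (M i j)%:~R); last first.
    by rewrite big1 ?mulr0 // => j _; rewrite hV mulr0.
  rewrite /ip rmorph_sum; under eq_bigr => i _ do rewrite rmorph_sum.
  rewrite exchange_big mulr_sumr; apply: eq_bigr => j _.
  rewrite mulr_sumr mulr_sumr; apply: eq_bigr => i _.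
  rewrite !rmorphM /= !hD; ring.
have hD0 : D = 0.
  apply/eqP; apply: contraT => hne; have := Hneg _ hne.
  by move: hip => /eqP; rewrite intr_eq0 => /eqP ->; rewrite ltxx.
move=> j; have := hD j; rewrite hD0 ffun0E => /esym /eqP.
by rewrite mulf_eq0 (negbTE hP) orbF => /eqP.
Qed.

Section Big.
Variable n : nat.
Variable M : 'M[int]_n.

Lemma dt_big (I : Type) (r : seq I) (P : pred I) (F : I -> ecycle n) j :
  dt M (\sum_(i <- r | P i) F i) j = \sum_(i <- r | P i) dt M (F i) j.
Proof. exact: (big_morph (fun D => dt M D j) (fun D1 D2 => dtD M D1 D2 j) (dt0 M j)). Qed.

Lemma ip0l X : ip M 0 X = 0.
Proof. by rewrite ipE big1 // => j _; rewrite dt0 mulr0. Qed.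

Lemma ip_bigl (I : Type) (r : seq I) (P : pred I) (F : I -> ecycle n) X :
  ip M (\sum_(i <- r | P i) F i) X = \sum_(i <- r | P i) ip M (F i) X.
Proof. exact: (big_morph (fun D => ip M D X) (fun D1 D2 => ipDl M D1 D2 X) (ip0l X)). Qed.

End Big.

Section Main.
Variable n : nat.
Variable M : 'M[int]_n.
Variable k : 'I_n -> int.
Variables (Z Zm : ecycle n) (Ds : seq (ecycle n)) (A : 'I_n).
Hypothesis Msym : M^T = M.
Hypothesis Moff : forall i j, i != j -> 0 <= M i j.
Hypothesis Hneg : forall D : ecycle n, D != 0 -> ip M D D < 0.
Hypothesis Hconn : forall i j, connect (fun a b => M a b != 0) i j.
Hypothesis Hadj : forall i, -2 <= k i + M i i.
Hypothesis Hk0 : forall i, 0 <= k i.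
Hypothesis HZ : is_fundamental_cycle M Z.
Hypothesis Hm2 : forall j, j != A -> M j j = -2 /\ k j = 0.
Hypothesis HkA : 0 <= k A + ip M Z Z.
Hypothesis HZm : is_Zmin M k Z Zm.
Hypothesis HDs : is_yau_sequence M k Z Zm Ds.
Hypothesis Hlast : last 0 Ds = Zm.

Local Notation m := (size Ds).
Local Notation Dn i := (nth 0 Ds i).
Local Notation qq := (q M k).

Lemma cpos_ge0 (D : ecycle n) : cpos D -> forall i, 0 <= D i.
Proof. by case=> h _ i; have := h i; rewrite ffun0E. Qed.

Lemma cpos_neq0 (D : ecycle n) : cpos D -> D != 0.
Proof. by case=> _ h; apply/eqP => e; apply: h; rewrite e. Qed.

Lemma Z_full i : 1 <= Z i.
Proof.
case: HZ => hp hnz _ _; move: (cpos_ge0 hp i) (hnz i); lia.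
Qed.

Lemma Kdot_A (D : ecycle n) : Kdot k D = D A * k A.
Proof.
rewrite /Kdot (bigD1 A) //= big1 ?addr0 // => j hj.
by have [_ ->] := Hm2 hj; rewrite mulr0.
Qed.

Lemma coefA (D : ecycle n) : cpos D -> cle D Z -> qq D = qq Z -> D A = Z A /\ ip M D D = ip M Z Z.
Proof.
move=> hp hle hq.
move: hq; rewrite /q !Kdot_A => hq.
have hneg := Hneg (cpos_neq0 hp).
have hle' := hle A.
have hkA := Hk0 A.
have hDA : D A = Z A.
  apply/eqP; rewrite eq_le hle' /=; rewrite leNgt; apply/negP => hlt.
  have : (Z A - D A) * k A >= k A.
    have h1 : 1 <= Z A - D A by move: hlt; lia.
    by rewrite -{1}(mul1r (k A)); apply: ler_wpM2r.
  lia.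
split => //; move: hq; rewrite hDA; lia.
Qed.

Lemma yau_facts : [/\ Ds <> [::], Dn 0 = Z,
      (forall i : nat, (i.+1 < m)%N ->
         num_trivial M Zm (Dn i) /\ is_tyurina M k (Dn i) (Dn i.+1))
    & ip M (last 0 Ds) Zm < 0].
Proof. exact: HDs. Qed.

Lemma m_pos : (0 < m)%N.
Proof. by case: yau_facts; case: Ds. Qed.

Lemma Dseq i : (i < m)%N -> [/\ cpos (Dn i), cle (Dn i) Z & qq (Dn i) = qq Z].
Proof.
case: yau_facts => _ h0 hst _.
elim: i => [|i IH] hi.
  by rewrite h0; split => //; case: HZ.
have [hp hle hq] := IH (ltnW hi).
have [_ [[hp' [hle' _] _ hpa] _]] := hst i hi.
split => //.
- by move=> j; apply: le_trans (hle' j) (hle j).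
- by rewrite -hq; apply/pa_eq.
Qed.

Lemma Dmono i d : (i + d < m)%N -> cle (Dn (i + d)) (Dn i).
Proof.
case: yau_facts => _ _ hst _.
elim: d => [|d IH] h; first by rewrite addn0 => j.
have hd : ((i + d).+1 < m)%N by rewrite -addnS.
have [_ [[_ [hle _] _ _] _]] := hst (i + d)%N hd.
move=> j; rewrite addnS; apply: le_trans (hle j) _; apply: IH; exact: ltnW.
Qed.

Lemma Dorth i i' : (i < i')%N -> (i' < m)%N -> ip M (Dn i) (Dn i') = 0.
Proof.
case: yau_facts => _ _ hst _ hii' hi'.
have hi1 : (i.+1 < m)%N by apply: leq_ltn_trans hi'.
have [_ [[_ _ hnt _] _]] := hst i hi1.
have hle : cle (Dn i') (Dn i.+1).
  by have := @Dmono i.+1 (i' - i.+1)%N; rewrite subnKC //; apply.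
have [hp _ _] := Dseq hi'.
rewrite ipE big1 // => F _.
have := cpos_ge0 hp F; rewrite le0r => /orP [/eqP ->|hF]; first by rewrite mul0r.
rewrite -ip_Ecomp hnt ?mulr0 //.
rewrite /comp_le; apply: le_trans (hle F); move: hF; lia.
Qed.

Lemma DA i : (i < m)%N -> Dn i A = Z A /\ ip M (Dn i) (Dn i) = ip M Z Z.
Proof. by move=> hi; have [hp hle hq] := Dseq hi; apply: coefA. Qed.

Lemma Zm_last : Dn m.-1 = Zm.
Proof. by rewrite nth_last Hlast. Qed.

Lemma ZmA : Zm A = Z A.
Proof.
have hm : (m.-1 < m)%N by rewrite prednK // m_pos.
by rewrite -Zm_last; case: (DA hm).
Qed.

Lemma dtA i : (i.+1 < m)%N -> dt M (Dn i) A = 0.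
Proof.
case: yau_facts => _ _ hst _ hi.
have [hnt _] := hst i hi.
rewrite -ip_Ecomp; apply: hnt; rewrite /comp_le ZmA; exact: Z_full.
Qed.



Lemma ge1 (x : int) : 0 <= x -> x != 0 -> 1 <= x.
Proof. by move=> h1 h2; rewrite -[1]add0r lezD1 lt0r h2. Qed.

Lemma tyu_max i : (i.+1 < m)%N -> forall E, dt M (Dn i) E = 0 -> dt M (Dn i.+1) E <= 0.
Proof.
case: yau_facts => _ _ hst _ hi E hE.
have [_ [[hpT [hleT hneT] hntT hpaT] hmax]] := hst i hi.
have [hpD hleD hqD] := Dseq (ltnW hi).
set D := Dn i in hE hpD hleD hqD hleT hneT hntT hpaT hmax *.
set T := Dn i.+1 in hpT hleT hneT hntT hpaT hmax *.
rewrite leNgt; apply/negP => hpos.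
have hge := cpos_ge0 hpT.
case: (ltrP (T E) (D E)) => hTD.
- (* T + E is a bigger candidate *)
  pose X := T + Ecomp E.
  have hXE : X E = T E + 1 by rewrite !ffunE eqxx.
  have hXo : forall F, F != E -> X F = T F by move=> F hF; rewrite !ffunE (negbTE hF) addr0.
  have hXD : cle X D.
    move=> F; case: (eqVneq F E) => [->|hF]; first by rewrite hXE lezD1.
    by rewrite hXo //; exact: hleT.
  have hXZ : cle X Z by move=> F; apply: le_trans (hXD F) (hleD F).
  have hpX := (cposDE E hpT).2.
  have hntX : num_trivial M X D.
    move=> F; rewrite /comp_le; case: (eqVneq F E) => [->|hF]; first by rewrite ip_Ecomp.
    by rewrite hXo //; exact: hntT.
  have hqX : qq X = qq Z.
    have hl : qq X <= qq Z by apply: (laufer Msym Moff Hconn Hadj HZ).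
    apply/eqP; rewrite eq_le hl /=.
    rewrite qDE // -hqD.
    have hqT : qq T = qq D by apply/pa_eq.
    rewrite hqT; have := Hadj E; move: hpos; lia.
  have hXneD : X <> D.
    move=> eXD; have := Hneg (cpos_neq0 hpD); rewrite ipE big1 ?ltxx // => F _.
    case: (eqVneq (X F) 0) => [h|h]; first by rewrite -eXD h mul0r.
    have : 1 <= X F by apply: ge1 => //; exact: cpos_ge0 hpX F.
    case: (eqVneq F E) => [->|hF]; first by rewrite hE mulr0.
    rewrite hXo // => h1; rewrite -ip_Ecomp hntT ?mulr0 //.
  have hcand : tyurina_cand M k D X.
    split; [exact: hpX | by split | exact: hntX | by apply/pa_eq; rewrite hqX hqD].
  by have := hmax X hcand E; rewrite hXE lezD1 ltxx.
-
  have hTE : T E = D E by apply/eqP; rewrite eq_le hleT hTD.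
  have h1 : 0 <= dt M (D - T) E.
    apply: dt_nonneg => //; last by rewrite !ffunE hTE subrr.
    by move=> F; rewrite !ffunE subr_ge0; exact: hleT.
  move: h1; rewrite dtB hE; lia.
Qed.

Lemma antinef i : (i < m)%N -> forall E, 1 <= Dn i E -> dt M (Dn i) E <= 0.
Proof.
case: yau_facts => _ h0 hst _.
case: i => [|i] hi E hE.
  by rewrite h0 -ip_Ecomp; case: HZ => _ _ h _; exact: h.
have [_ [[_ _ hnt _] _]] := hst i hi.
apply: tyu_max => //; rewrite -ip_Ecomp; exact: hnt.
Qed.

Lemma add_le1 i : (i < m)%N -> forall E, Dn i E = 0 -> dt M (Dn i) E <= 1.
Proof.
move=> hi E hE.
have [hp hle hq] := Dseq hi.
have hEA : E != A.
  apply/eqP => eEA; have := (DA hi).1; rewrite -eEA hE => e.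
  by have := Z_full E; rewrite -e.
have [hEE hkE] := Hm2 hEA.
have hpX := (cposDE E hp).2.
have hXZ : cle (Dn i + Ecomp E) Z.
  move=> F; rewrite !ffunE; case: (eqVneq F E) => [->|hF].
    by rewrite hE add0r; exact: Z_full.
  by rewrite /= addr0; exact: hle.
have := laufer Msym Moff Hconn Hadj HZ hpX hXZ.
rewrite qDE // hq hEE hkE; lia.
Qed.

Lemma PZm E : E != A -> 1 <= Zm E -> dt M Zm E = 0.
Proof.
move=> hEA hE.
have hm : (m.-1 < m)%N by rewrite prednK // m_pos.
have h1 : dt M Zm E <= 0 by rewrite -Zm_last; apply: antinef => //; rewrite Zm_last.
apply/eqP; rewrite eq_le h1 /= leNgt; apply/negP => hlt.
case: HZm => hpZ hleZ hpaZ hmin.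
have [hEE hkE] := Hm2 hEA.
pose X := Zm - Ecomp E.
have hXA : X A = Zm A by rewrite !ffunE eq_sym (negbTE hEA) subr0.
have hXE : X E = Zm E - 1 by rewrite !ffunE eqxx.
have hX0 : cle 0 X.
  move=> F; rewrite ffun0E !ffunE; case: (eqVneq F E) => [->|hF] /=.
    by rewrite subr_ge0.
  by rewrite subr0; exact: (cpos_ge0 hpZ F).
have hpX : cpos X.
  split => // e; have := congr1 (fun f : ecycle n => f A) e.
  rewrite ffun0E hXA ZmA => h; have := Z_full A; rewrite -h.
  by [].
have hXZ : cle X Z.
  move=> F; apply: le_trans (hleZ F); rewrite !ffunE; case: (F == E) => /=.
    by rewrite gerBl.
  by rewrite subr0.
have hq : qq X = qq Z.
  apply/eqP; rewrite eq_le (laufer Msym Moff Hconn Hadj HZ hpX hXZ) /=.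
  rewrite /X qBE // hEE hkE.
  have -> : qq Zm = qq Z by apply/pa_eq.
  move: hlt; lia.
have := hmin X hpX hXZ (proj2 (pa_eq M k X Z) hq) E.
rewrite hXE; lia.
Qed.



Definition Ysum j := \sum_(j <= i < m) Dn i.

Lemma Ysum_ge j : (m <= j)%N -> Ysum j = 0.
Proof. by move=> h; rewrite /Ysum big_geq. Qed.

Lemma Ysum_S j : (j < m)%N -> Ysum j = Dn j + Ysum j.+1.
Proof. by move=> h; rewrite /Ysum big_ltn. Qed.

Lemma Ysum_last : Ysum m.-1 = Zm.
Proof.
have hm : (m.-1 < m)%N by rewrite prednK // m_pos.
by rewrite Ysum_S // Ysum_ge ?addr0 ?Zm_last // prednK // m_pos.
Qed.

Lemma YA_aux d : forall j, (j + d)%N = m.-1 -> dt M (Ysum j) A = dt M Zm A.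
Proof.
have hm0 := m_pos.
elim: d => [|d IH] j hj.
  by move: hj; rewrite addn0 => ->; rewrite Ysum_last.
have hj1 : (j.+1 < m)%N by rewrite -(prednK hm0) ltnS -hj addnS ltnS leq_addr.
rewrite Ysum_S ?(ltnW hj1) // dtD dtA // add0r; apply: IH; rewrite addSn -addnS.
exact: hj.
Qed.

Lemma YA j : (j < m)%N -> dt M (Ysum j) A = dt M Zm A.
Proof.
move=> hj; apply: (@YA_aux (m.-1 - j)%N); rewrite subnKC //.
by rewrite -ltnS prednK // m_pos.
Qed.

Lemma ZmA_dt : Z A * dt M Zm A = ip M Z Z.
Proof.
have hm : (m.-1 < m)%N by rewrite prednK // m_pos.
have [_ hZZ] := DA hm; rewrite Zm_last in hZZ.
rewrite -hZZ ipE (bigD1 A) //= ZmA big1 ?addr0 // => F hF.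
have [hpZ _ _ _] := HZm.
have := cpos_ge0 hpZ F; rewrite le0r => /orP [/eqP ->|h]; first by rewrite mul0r.
by rewrite PZm ?mulr0 // ge1 // ltW.
Qed.

Definition Pj j := forall E, E != A -> 1 <= Dn j E -> dt M (Ysum j) E = 0.

Lemma P_ge j : (m <= j)%N -> Pj j.
Proof. by move=> h E _; rewrite nth_default // ffun0E. Qed.

Lemma P_last : Pj m.-1.
Proof. by move=> E hE h; rewrite Ysum_last; apply: PZm => //; rewrite -Zm_last. Qed.



Lemma step0 j : (j.+1 < m)%N -> Pj j.+2 ->
  forall E, 1 <= Dn j E -> Dn j.+1 E = 0 -> dt M (Ysum j.+2) E = 0.
Proof.
move=> hj hP2 E hE hT.
have hleT : cle (Dn j.+1) (Dn j).
  by have := @Dmono j 1; rewrite addn1; apply.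
have hAD := (DA (ltnW hj)).1.
have hAT := (DA hj).1.
have hsum : ip M (Ysum j.+2) (Dn j - Dn j.+1) = 0.
  rewrite /Ysum ip_bigl; apply: big1_seq => i /andP [_]; rewrite mem_index_iota => /andP [h1 h2].
  rewrite (ipBr Msym) (ip_sym Msym (Dn i) (Dn j)) (ip_sym Msym (Dn i) (Dn j.+1)).
  rewrite !Dorth ?subrr //; exact: leq_trans h1.
rewrite ipE in hsum.
have hnn : forall F, true -> 0 <= (Dn j - Dn j.+1) F * dt M (Ysum j.+2) F.
  move=> F _.
  have hx : 0 <= (Dn j - Dn j.+1) F by rewrite !ffunE subr_ge0; exact: hleT.
  case: (eqVneq ((Dn j - Dn j.+1) F) 0) => [->|hx0]; first by rewrite mul0r.
  apply: mulr_ge0 => //.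
  have hFA : F != A.
    by apply: contra_neq hx0 => ->; rewrite !ffunE hAD hAT subrr.
  case: (ltnP j.+2 m) => hj2; last by rewrite Ysum_ge // dt0.
  have [hp2 _ _] := Dseq hj2.
  case: (eqVneq (Dn j.+2 F) 0) => h2; last first.
    by rewrite hP2 // ge1 // (cpos_ge0 hp2).
  rewrite /Ysum dt_big big_nat_cond; apply: sumr_ge0 => i /andP [/andP [h1 h3] _].
  have [hpi _ _] := Dseq h3.
  have hi0 : Dn i F = 0.
    apply/eqP; rewrite eq_le (cpos_ge0 hpi) andbT -h2.
    by have := @Dmono j.+2 (i - j.+2)%N; rewrite subnKC //; apply.
  by apply: dt_nonneg => //; case: hpi.
have := psumr_eq0P hnn hsum => /(_ E isT).
move/eqP; rewrite mulf_eq0 => /orP [|/eqP //].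
by rewrite !ffunE hT subr0 => /eqP h; move: hE; rewrite h.
Qed.



Lemma step1 j : (j.+1 < m)%N -> Pj j.+1 -> Pj j.+2 ->
  forall E, E != A -> 1 <= Dn j E -> dt M (Ysum j) E <= 0.
Proof.
move=> hj hP1 hP2 E hEA hE.
case: yau_facts => _ _ hst _.
have [_ [[hpT _ hntT _] _]] := hst j hj.
rewrite Ysum_S ?(ltnW hj) // dtD.
have hT0 := cpos_ge0 hpT E.
case: (eqVneq (Dn j.+1 E) 0) => hT; last first.
  have hT1 : 1 <= Dn j.+1 E by apply: ge1.
  by rewrite hP1 // -ip_Ecomp hntT // addr0.
rewrite Ysum_S // dtD (step0 hj hP2 hE hT) addr0.
have ha := antinef (ltnW hj) hE.
case: (eqVneq (dt M (Dn j) E) 0) => hd.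
  by rewrite hd add0r; apply: tyu_max.
have hlt : dt M (Dn j) E < 0 by rewrite lt_neqAle hd ha.
have := add_le1 hj hT; lia.
Qed.

Lemma P_step j : (j.+1 < m)%N -> Pj j.+1 -> Pj j.+2 -> Pj j.
Proof.
move=> hj hP1 hP2.
have hj0 : (j < m)%N by apply: ltnW.
have [hpD _ _] := Dseq hj0.
have [hAD hDD] := DA hj0.
have hs : ip M (Ysum j) (Dn j) = ip M Z Z.
  rewrite /Ysum ip_bigl big_ltn // hDD big1_seq ?addr0 // => i /andP [_].
  rewrite mem_index_iota => /andP [h1 h2].
  by rewrite (ip_sym Msym) Dorth.
move: hs; rewrite ipE (bigD1 A) //= hAD YA // ZmA_dt -{2}[ip M Z Z]addr0 => /addrI hs0.
have hnn : forall F, F != A -> 0 <= - (Dn j F * dt M (Ysum j) F).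
  move=> F hF; rewrite oppr_ge0.
  have := cpos_ge0 hpD F; rewrite le0r => /orP [/eqP ->|h]; first by rewrite mul0r.
  apply: mulr_ge0_le0; first exact: ltW.
  by apply: step1.
have hs1 : \sum_(F | F != A) - (Dn j F * dt M (Ysum j) F) = 0 by rewrite sumrN hs0 oppr0.
move=> E hEA hE.
have := psumr_eq0P hnn hs1 => /(_ E hEA) /eqP.
rewrite oppr_eq0 mulf_eq0 => /orP [/eqP h|/eqP //].
by move: hE; rewrite h.
Qed.

Lemma allP_aux d : forall j, (m - j <= d)%N -> Pj j.
Proof.
elim: d => [|d IH] j hj.
  by apply: P_ge; move: hj; rewrite leqn0 subn_eq0.
case: (leqP (m - j) d) => hd; first exact: IH.
have hjm : (j < m)%N by move: hd; lia.
case: (eqVneq j m.-1) => [->|hne]; first exact: P_last.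
have hj1 : (j.+1 < m)%N by move: hjm hne; lia.
apply: P_step => //; apply: IH; move: hj; lia.
Qed.

Lemma allP j : Pj j.
Proof. exact: (@allP_aux (m - j)). Qed.



Lemma yau_Ysum : yau_cycle Ds = Ysum 0.
Proof. by rewrite /yau_cycle (big_nth 0). Qed.

Lemma final_main (ZK : 'I_n -> rat) : is_canonical_cycle M k ZK ->
  forall i, ZK i =
    ((2 - 2 * pa M k Z) / (ip M Z Z)%:~R + 1) * ((yau_cycle Ds) i)%:~R.
Proof.
move=> HZK.
set c := ((2 - 2 * pa M k Z) / (ip M Z Z)%:~R + 1).
set Y := yau_cycle Ds.
have hP0 : Pj 0 := @allP 0.
have hm := m_pos.
have hD0 : Dn 0 = Z by case: yau_facts.
have hYA : dt M Y A = dt M Zm A by rewrite /Y yau_Ysum YA.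
have hYo : forall E, E != A -> dt M Y E = 0.
  by move=> E hE; rewrite /Y yau_Ysum hP0 // hD0 Z_full.
have hZA := ZmA_dt.
have hZ2 : ip M Z Z < 0 by apply: Hneg; apply: cpos_neq0; case: HZ.
have hdtY : forall i, ((dt M Y i)%:~R : rat) = \sum_j (Y j)%:~R * (M j i)%:~R.
  move=> i; rewrite /dt rmorph_sum; apply: eq_bigr => j _; by rewrite rmorphM.
pose V := fun j => ZK j - c * (Y j)%:~R.
have hV : forall i, \sum_j V j * (M j i)%:~R = 0.
  move=> i; rewrite /V.
  under eq_bigr => j _ do rewrite mulrBl -mulrA.
  rewrite sumrB HZK -mulr_sumr -hdtY.
  case: (eqVneq i A) => [->|hiA]; last first.
    by rewrite hYo // (Hm2 hiA).2 mulr0 oppr0 subr0.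
  rewrite hYA /c /pa /q Kdot_A.
  have hz : (Z A)%:~R != 0 :> rat by rewrite intr_eq0; have := Z_full A; lia.
  have ht : (dt M Zm A)%:~R != 0 :> rat.
    rewrite intr_eq0; apply/eqP => e; move: hZ2; rewrite -hZA e mulr0 ltxx.
    by [].
  rewrite -hZA !rmorphD !rmorphM /=.
  field.
  by rewrite hz ht.
move=> i; have := nondeg Hneg hV i; rewrite /V => /eqP; rewrite subr_eq0 => /eqP.
done.
Qed.

End Main.

Unset Implicit Arguments.

Theorem proposition3p6 (n : nat) (M : 'M[int]_n) (k : 'I_n -> int)
  (Z Zm : ecycle n) (Ds : seq (ecycle n)) (A : 'I_n) (ZK : 'I_n -> rat) :
  min_res_data M k ->
  is_fundamental_cycle M Z ->
  0 < pa M k Z ->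
  essentially_irreducible M k Z ->
  ~~ minus2 M k A ->
  0 <= k A + ip M Z Z ->
  is_Zmin M k Z Zm ->
  is_yau_sequence M k Z Zm Ds ->
  last 0 Ds = Zm ->
  is_canonical_cycle M k ZK ->
  forall i, ZK i =
    ((2 - 2 * pa M k Z) / (ip M Z Z)%:~R + 1) * ((yau_cycle Ds) i)%:~R.
Proof.
move=> Hmr HZ _ Hess hnA hkA HZm HDs Hlast HZK.
case: Hmr => Msym Moff Hneg Hconn Hk.
have Hadj : forall i, -2 <= k i + M i i by move=> i; case: (Hk i).
have Hk0 : forall i, 0 <= k i by move=> i; case: (Hk i).
have hnz : forall j, Z j != 0 by case: HZ.
case: Hess => A' [_ _ hcase].
have hall : forall j, j != A' -> minus2 M k j.
  move=> j hj; case: hcase => [hZ|h].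
    have := congr1 (fun f : ecycle n => f j) hZ; rewrite !ffunE (negbTE hj) mulr0 => e.
    by have := hnz j; rewrite e eqxx.
  by apply: h; rewrite !ffunE (negbTE hj) mulr0 subr0.
have hAA : A = A'.
  apply/eqP; apply: contraR hnA => h; exact: hall.
have Hm2 : forall j, j != A -> M j j = -2 /\ k j = 0.
  by move=> j hj; have := hall j; rewrite -hAA => /(_ hj) /andP [/eqP -> /eqP ->].
exact: (final_main Msym Moff Hneg Hconn Hadj Hk0 HZ Hm2 hkA HZm HDs Hlast HZK).
Qed.
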